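(* Let $(X_n,\|\cdot\|_n)_{n\ge1}$ be a sequence of Banach spaces and let $\|\cdot\|$ be the norm on $c_{00}((X_n))$ defined in the context. Let $m\in\mathbb{N}$ and $x_n\in X_n$ for $n=1,\dots,m$. Then $$\sum_{n=1}^m\frac12\|x_n\|_n\le \sum_{n=1}^m\Big(1-\frac{1}{n+1}\Big)\|x_n\|_n\le \|(x_1,\dots,x_m)\|\le\sum_{n=1}^m\|x_n\|_n.$$
   Context: $c_{00}((X_n))$ is the vector space of sequences $(x_1,x_2,\dots)$ with $x_k\in X_k$ and only finitely many $x_k\ne0$; $(x_1,\dots,x_n)$ denotes $(x_1,\dots,x_n,0,0,\dots)$. The norm is defined inductively: $\|(x_1)\|=\|x_1\|_1$ (the norm of $X_1$), and for $n\ge2$, $$\|(x_1,\dots,x_n)\|=\Big(1-\tfrac{1}{n+1}\Big)\big(\|x_n\|_n+\|(x_1,\dots,x_{n-1})\|\big)+\tfrac{1}{n+1}\max\Big\{\tfrac{\|x_n\|_n}{n},\ \|(x_1,\dots,x_{n-1})\|\Big\}.$$ *)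

(* Defs.v *)
From HB Require Import structures.
From mathcomp Require Import all_boot all_order all_algebra.
From mathcomp Require Import all_classical all_reals all_analysis.
Set Implicit Arguments. Unset Strict Implicit. Unset Printing Implicit Defensive.
Import Order.TTheory GRing.Theory Num.Theory.
Import numFieldNormedType.Exports.
Local Open Scope ring_scope.

(* The inductively defined norm on c00((X_n)), evaluated on (x_1,...,x_m).
   Spaces are indexed by nat; index 0 is unused (paper indexes from 1).
   c00norm x 0 = 0 (empty sequence, unused), c00norm x 1 = ||x_1||_1, and for
   n >= 2 the recursive formula of the paper. *)
Fixpoint c00norm (R : realType) (X : nat -> completeNormedModType R)
    (x : forall n, X n) (m : nat) : R :=
  match m with
  | 0 => 0
  | 1 => `|x 1%N|
  | S (S k as p) =>
      let n := p.+1 in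
      (1 - (n.+1)%:R^-1) * (`|x n| + c00norm x p)
      + (n.+1)%:R^-1 * Num.max (`|x n| / n%:R) (c00norm x p)
  end.

(* Main.v *)
Require Import Defs.
From HB Require Import structures.
From mathcomp Require Import all_boot all_order all_algebra.
From mathcomp Require Import all_classical all_reals all_analysis.
Import Order.TTheory GRing.Theory Num.Theory.
Import numFieldNormedType.Exports.
Local Open Scope ring_scope.

Lemma aux (R : realType) (X : nat -> completeNormedModType R)
    (x : forall n, X n) (k : nat) :
  0 <= c00norm x k.+1 /\
  \sum_(1 <= n < k.+2) ((1 - (n.+1)%:R^-1) * `|x n|) <= c00norm x k.+1
  /\ c00norm x k.+1 <= \sum_(1 <= n < k.+2) `|x n|.
Proof.
elim: k => [|k [IH0 [IH1 IH2]]].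
  rewrite /= !big_nat1; split => //; split => //.
  by rewrite ler_piMl // lerBlDr lerDl.
rewrite !(@big_nat_recr _ _ _ (k.+2) 1) //=.
set S := c00norm x k.+1.
set t := `|x k.+2|.
set a := ((k.+3)%:R^-1 : R).
have ha0 : 0 <= a by rewrite invr_ge0.
have ha1 : a <= 1 by rewrite invf_le1 // ler1n.
have ht : 0 <= t by exact: normr_ge0.
have hM1 : S <= Num.max (t / (k.+2)%:R) S by rewrite le_max lexx orbT.
have hM0 : 0 <= Num.max (t / (k.+2)%:R) S by rewrite le_max IH0 orbT.
have hM2 : Num.max (t / (k.+2)%:R) S <= t + S.
  rewrite ge_max; apply/andP; split; last by rewrite lerDr.
  apply: (@le_trans _ _ t); last by rewrite lerDl.
  by rewrite ler_pdivrMr ?ltr0n // ler_peMr // ler1n.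
have h1a : 0 <= 1 - a by rewrite subr_ge0.
split; [|split].
- apply: addr_ge0; apply: mulr_ge0 => //; exact: addr_ge0.
- have E1 := ler_wpM2l ha0 hM1.
  have E2 : (1 - a) * t + S <= (1 - a) * (t + S) + a * S by rewrite mulrDr -addrA -mulrDl subrK mul1r.
  apply: le_trans (lerD (lexx _) E1).
  apply: le_trans E2.
  by rewrite addrC lerD2l.
- have E1 := ler_wpM2l ha0 hM2.
  apply: le_trans (lerD (lexx _) E1) _.
  rewrite -mulrDl subrK mul1r addrC; apply: lerD => //.
Qed.

Theorem proposition1p1 (R : realType) (X : nat -> completeNormedModType R)
    (x : forall n, X n) (m : nat) (hm : (1 <= m)%N) :
  \sum_(1 <= n < m.+1) (2%:R^-1 * `|x n|)
    <= \sum_(1 <= n < m.+1) ((1 - (n.+1)%:R^-1) * `|x n|)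
  /\ \sum_(1 <= n < m.+1) ((1 - (n.+1)%:R^-1) * `|x n|) <= c00norm x m
  /\ c00norm x m <= \sum_(1 <= n < m.+1) `|x n|.
Proof.
case: m hm => // k _.
have [_ [H1 H2]] := @aux R X x k.
split; [|by split].
rewrite big_nat_cond [X in _ <= X]big_nat_cond.
apply: ler_sum => n /andP [/andP [hn _] _].
apply: ler_wpM2r => //.
rewrite lerBrDr -lerBrDl.
have -> : 1 - 2%:R^-1 = 2%:R^-1 :> R by rewrite {1}(splitr 1) mul1r addrK.
by rewrite lef_pV2 ?posrE ?ltr0n // ler_nat ltnS.
Qed.
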